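(* Under the setting and hypotheses of the following result — namely, $\mathbb P[\mathbf s_{1,\ldots,N}\in\mathbb S\mid\mathbf s_0,\boldsymbol\pi^0]\ge S_0\ge S$ and, for every $k\in\{1,\ldots,N-1\}$ and every $\mathbf s_k\in\mathbb S$, $\mathbb P[\mathbf s_{k+1,\ldots,N}\in\mathbb S\mid\mathbf s_k,\boldsymbol\pi^k]\ge\gamma_k\,\mathbb P[\mathbf s_{k+1,\ldots,N}\in\mathbb S\mid\mathbf s_k,\boldsymbol\pi^{k-1}]$ with $\gamma_k\in(0,1]$ — if moreover the factors are chosen so that $\big(\prod_{k=1}^{N-1}\gamma_k\big)S_0=S$, then the closed-loop policy sequence $\{\boldsymbol\pi^0_0,\ldots,\boldsymbol\pi^{N-1}_{N-1}\}$ satisfies $$\mathbb P\big[\mathbf s_{1,\ldots,N}\in\mathbb S\mid\mathbf s_0,\{\boldsymbol\pi^0_0,\ldots,\boldsymbol\pi^{N-1}_{N-1}\}\big]\ge S.$$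
   Context: States $\mathbf s_k\in\mathbb R^n$ evolve as a controlled Markov chain with transition density $\rho[\mathbf s_+\mid\mathbf s,\mathbf u]$; $\mathbb S\subset\mathbb R^n$ is measurable, $\mathbf s_0\in\mathbb S$, $N\in\mathbb N$, $S\in[0,1]$. For each $k\in\{0,\ldots,N-1\}$, $\boldsymbol\pi^k=\{\boldsymbol\pi^k_k,\ldots,\boldsymbol\pi^k_{N-1}\}$ is a policy sequence of measurable maps $\mathbf s\mapsto\mathbf u$ for times $k,\ldots,N-1$; the closed loop applies $\mathbf u_k=\boldsymbol\pi^k_k(\mathbf s_k)$. The notation $\mathbf s_{a,\ldots,b}\in\mathbb S$ means $\mathbf s_j\in\mathbb S$ for $j=a,\ldots,b$. $\mathbb P[\mathbf s_{1,\ldots,N}\in\mathbb S\mid\mathbf s_0,\cdot]$ is the mission-wide probability of safety; $\mathbb P[\mathbf s_{k+1,\ldots,N}\in\mathbb S\mid\mathbf s_k,\cdot]$ is the remaining mission-wide probability of safety from state $\mathbf s_k$ at time $k$ under the given policy components at times $k,\ldots,N-1$. *)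

(* Defs.v *)
From HB Require Import structures.
From mathcomp Require Import all_boot all_order all_algebra.
From mathcomp Require Import all_classical all_reals all_analysis.
Set Implicit Arguments. Unset Strict Implicit. Unset Printing Implicit Defensive.
Import Order.TTheory GRing.Theory Num.Theory.
Local Open Scope classical_set_scope.
Local Open Scope ring_scope.
Local Open Scope ereal_scope.

(* Controlled Markov chain on a state space T (measurable) with control space U.
   rho x s u = transition density rho[s_+ = x | s, u] w.r.t. the reference measure mu.
   A policy sequence is  pol : nat -> T -> U  indexed by absolute time j
   (only the components j = k, ..., N-1 are used). *)

(* safe_rec m j s = probability that the next m states s_{j+1}, ..., s_{j+m}
   all lie in SS, starting from s_j = s, applying u_i = pol i s_i. *)
Fixpoint safe_rec (d1 d2 : measure_display) (T : measurableType d1)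
  (U : measurableType d2) (R : realType) (mu : {measure set T -> \bar R})
  (rho : T -> T -> U -> R) (SS : set T) (pol : nat -> T -> U)
  (m j : nat) (s : T) : \bar R :=
  match m with
  | 0 => 1
  | m'.+1 => \int[mu]_(x in SS)
               ((rho x s (pol j s))%:E * safe_rec mu rho SS pol m' j.+1 x)
  end.

(* safe_prob mu rho SS N pol k s = P[ s_{k+1,...,N} in SS | s_k = s, pol ]. *)
Definition safe_prob (d1 d2 : measure_display) (T : measurableType d1)
  (U : measurableType d2) (R : realType) (mu : {measure set T -> \bar R})
  (rho : T -> T -> U -> R) (SS : set T) (N : nat) (pol : nat -> T -> U)
  (k : nat) (s : T) : \bar R :=
  safe_rec mu rho SS pol (N - k) k s.

(* Main.v *)
Require Import Defs.
From HB Require Import structures.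
From mathcomp Require Import all_boot all_order all_algebra.
From mathcomp Require Import all_classical all_reals all_analysis.
Import Order.TTheory GRing.Theory Num.Theory.
Local Open Scope classical_set_scope.
Local Open Scope ring_scope.

Import HBNNSimple.

Lemma scale_int_le d (T : measurableType d) (R : realType)
  (mu : {measure set T -> \bar R}) (D : set T) (f g : T -> \bar R) (c : R) :
  0 < c -> (forall x, D x -> (0 <= f x)%E) ->
  (forall x, D x -> (c%:E * f x <= g x)%E) ->
  (c%:E * \int[mu]_(x in D) f x <= \int[mu]_(x in D) g x)%E.
Proof.
move=> c0 f0 fg.
have g0 : forall x, D x -> (0 <= g x)%E.
  move=> x Dx; apply: le_trans (fg x Dx); apply: mule_ge0; [by rewrite lee_fin ltW|exact: f0].
rewrite !ge0_integralE //= -ereal_sup_pZl //.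
apply/ge_ereal_sup => _ [_ [h /= hf <-] <-].
apply: ereal_sup_ubound => /=.
exists (scale_nnsfun h (ltW c0)); last by rewrite sintegralrM.
move=> x /=; rewrite /patch; case: ifPn => Dx.
  have := hf x; rewrite /patch Dx EFinM => hx.
  apply: le_trans (fg x _); last by move: Dx; rewrite inE.
  by rewrite lee_wpmul2l // lee_fin ltW.
have := hf x; rewrite /patch (negbTE Dx) lee_fin => hx.
by rewrite lee_fin mulr_ge0_le0 // ltW.
Qed.

Lemma safe_rec_ge0 d1 d2 (T : measurableType d1) (U : measurableType d2) (R : realType)
  (mu : {measure set T -> \bar R}) (rho : T -> T -> U -> R) (SS : set T) pol :
  (forall x s u, 0 <= rho x s u) ->
  forall m j s, (0 <= safe_rec mu rho SS pol m j s)%E.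
Proof.
move=> rho0; elim=> [|m IH] j s /=; first by [].
apply: integral_ge0 => x _; apply: mule_ge0 => //; by rewrite lee_fin.
Qed.

Theorem corollary1 (d1 d2 : measure_display) (T : measurableType d1)
  (U : measurableType d2) (R : realType) (mu : {measure set T -> \bar R})
  (rho : T -> T -> U -> R) (SS : set T) (N : nat)
  (pi : nat -> nat -> T -> U) (s0 : T) (Sl S0 : R) (gamma : nat -> R) :
  measurable SS ->
  (forall x s u, 0 <= rho x s u) ->
  measurable_fun setT (fun p : T * (T * U) => rho p.1 p.2.1 p.2.2) ->
  (forall s u, (\int[mu]_x (rho x s u)%:E = 1)%E) ->
  (forall k j, measurable_fun setT (pi k j)) ->
  SS s0 ->
  0 <= Sl <= 1 ->
  (S0%:E <= safe_prob mu rho SS N (pi 0%N) 0 s0)%E ->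
  Sl <= S0 ->
  (forall k, (1 <= k < N)%N -> 0 < gamma k <= 1) ->
  (forall k s, (1 <= k < N)%N -> SS s ->
     ((gamma k)%:E * safe_prob mu rho SS N (pi k.-1) k s
        <= safe_prob mu rho SS N (pi k) k s)%E) ->
  (\prod_(1 <= k < N) gamma k) * S0 = Sl ->
  (Sl%:E <= safe_prob mu rho SS N (fun j => pi j j) 0 s0)%E.
Proof.
move=> mSS rho0 mrho int1 mpi Ss0 Sl01 HS0 SlS0 hg Hg Hprod.
set G := fun a => \prod_(a <= i < N) gamma i.
have Gpos : forall a, (1 <= a)%N -> 0 < G a.
  move=> a a1; rewrite /G big_nat_cond; apply: (big_ind (fun x => 0 < x)) => //.
    by move=> x y; apply: mulr_gt0.
  move=> i /andP[/andP[ai iN] _].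
  by have /andP[] := hg i ltac:(apply/andP; split => //; exact: leq_trans ai).
have key : forall m k s, (k + m)%N = N -> SS s ->
  ((G k.+1)%:E * safe_rec mu rho SS (pi k) m k s
     <= safe_rec mu rho SS (fun j => pi j j) m k s)%E.
  elim=> [|m IH] k s kmN Ss.
    by rewrite /= mule1 /G big_geq ?lee_fin // -kmN addn0.
  rewrite /=; apply: scale_int_le.
  - by apply: Gpos.
  - move=> x _; apply: mule_ge0; [by rewrite lee_fin|exact: safe_rec_ge0].
  move=> x Sx; rewrite muleCA; apply: lee_wpmul2l; first by rewrite lee_fin.
  case: m IH kmN => [|m] IH kmN.
    by rewrite /= mule1 /G big_geq ?lee_fin // -kmN addn1.
  have kN : (k.+1 < N)%N by rewrite -kmN !addnS !ltnS leq_addr.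
  rewrite /G big_ltn // mulrC EFinM -muleA -/(G k.+2).
  apply: (le_trans _ (IH k.+1 x _ Sx)); last by rewrite -kmN addSnnS.
  apply: lee_wpmul2l; first by rewrite lee_fin ltW // Gpos.
  have := Hg k.+1 x ltac:(by rewrite kN) Sx.
  by rewrite /safe_prob /= -kmN addnS subSS addKn.
have := key N 0%N s0 (add0n N) Ss0.
rewrite /safe_prob subn0; apply: le_trans.
rewrite -Hprod EFinM; apply: lee_wpmul2l; last by rewrite /safe_prob subn0 in HS0.
rewrite lee_fin; exact: ltW (Gpos 1%N (leqnn 1)).
Qed.
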